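(* Let $k$ be a positive integer and let $G$ be a finite graph whose vertex set is partitioned into stable sets $V_1,\ldots,V_r$. If for each $i \in \{1,\ldots,r\}$ each vertex in $V_i$ has degree at most $\min\{k, |V_i|-k\}$, then for any vertex $v$ of $G$, $G$ has an ISR containing $v$.
   Context: An independent system of representatives (ISR) of $(V_1,\ldots,V_r)$ is a stable set of size $r$ in $G$ meeting each $V_i$ exactly once. *)

(* Defs.v *)
From mathcomp Require Import all_boot all_order all_algebra.
Set Implicit Arguments. Unset Strict Implicit. Unset Printing Implicit Defensive.

Definition simple_graph (T : finType) (e : rel T) : Prop :=
  symmetric e /\ irreflexive e.

Definition stable (T : finType) (e : rel T) (S : {set T}) : Prop :=
  forall x y, x \in S -> y \in S -> ~~ e x y.

Definition deg (T : finType) (e : rel T) (x : T) : nat := #|[set y | e x y]|.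

Definition part (T : finType) (r : nat) (p : T -> 'I_r) (i : 'I_r) : {set T} :=
  [set x | p x == i].

Definition is_ISR (T : finType) (e : rel T) (r : nat) (p : T -> 'I_r) (S : {set T}) : Prop :=
  stable e S /\ #|S| = r /\ forall i : 'I_r, #|S :&: part p i| = 1.

(* Main.v *)
Require Import Defs.
From mathcomp Require Import all_boot all_order all_algebra zify.
Import Order.TTheory GRing.Theory Num.Theory.
Set Implicit Arguments. Unset Strict Implicit. Unset Printing Implicit Defensive.

Fixpoint ltlex (x y : seq nat) : bool :=
  match x, y with
  | [::], _ => false
  | _ :: _, [::] => true
  | a :: x', b :: y' => (a < b) || ((a == b) && ltlex x' y')
  end.

Lemma ltlex_ext u c w : ltlex (u ++ c :: w) u.
Proof. elim: u => [//|a u IH] /=. by rewrite eqxx IH orbT. Qed.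

Lemma ltlex_map (A : eqType) (s : seq A) (f' f : A -> nat) c' c w' w :
  (forall z, z \in s -> f' z <= f z) -> c' < c ->
  ltlex (map f' s ++ c' :: w') (map f s ++ c :: w).
Proof.
elim: s => [|a s IH] H hc /=; first by rewrite hc.
have ha : f' a <= f a by apply: H; rewrite inE eqxx.
have IH' : ltlex (map f' s ++ c' :: w') (map f s ++ c :: w).
  by apply: IH => // z zs; apply: H; rewrite inE zs orbT.
rewrite IH' andbT. case: (ltngtP (f' a) (f a)) => //; by rewrite ltnNge ha.
Qed.

Fixpoint enc (B L : nat) (m : seq nat) : nat :=
  match L with
  | 0 => 0
  | L'.+1 => match m with
             | [::] => B ^ L'.+1 - 1
             | a :: m' => a * B ^ L' + enc B L' m'
             end
  end.

Lemma enc_lt B L m : 0 < B -> size m <= L -> all (fun a => a.+2 <= B) m ->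
  enc B L m < B ^ L.
Proof.
move=> B0; elim: L m => [|L IH] [|a m] //=.
- move=> _ _; have := expn_gt0 B L.+1; rewrite B0 /=; lia.
- move=> hs /andP[ha hm]. have := IH m hs hm. rewrite expnS.
  set P := B ^ L. nia.
Qed.

Lemma enc_mono B L x y : 0 < B -> size x <= L -> size y <= L ->
  all (fun a => a.+2 <= B) x -> all (fun a => a.+2 <= B) y ->
  ltlex x y -> enc B L x < enc B L y.
Proof.
move=> B0; elim: L x y => [|L IH] [|a x] [|b y] //=.
- move=> hx _ /andP[ha hx'] _ _. have := @enc_lt B L x B0 hx hx'. rewrite expnS.
  have := expn_gt0 B L; rewrite B0 /=. set P := B ^ L. nia.
- move=> hx hy /andP[ha hx'] /andP[hb hy'] /orP[hab|/andP[/eqP eab hl]].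
  + have := @enc_lt B L x B0 hx hx'. have := @enc_lt B L y B0 hy hy'. set P := B ^ L. nia.
  + subst b. have := IH x y hx hy hx' hy' hl. lia.
Qed.

Section Haxell.
Variables (T : finType) (e : rel T) (r k : nat) (p : T -> 'I_r).
Hypothesis esym : symmetric e.
Hypothesis eirr : irreflexive e.
Hypothesis hdeg : forall x, deg e x <= k /\ deg e x + k <= #|part p (p x)|.
Variable C : {set 'I_r}.
Variable v : T.
Hypothesis vC : p v \notin C.

Definition cls (z : T * T) : 'I_r := p z.2.
Definition dom (s : seq (T*T)) (w : T) := has (fun z => e z.1 w || e z.2 w) s.
Definition U (s : seq (T*T)) (w : T) := (w == v) || (p w \in map cls s).
Definition cond (pre : seq (T*T)) (z : T*T) := [&& e z.1 z.2, U pre z.1 & ~~ dom pre z.1].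
Fixpoint vfrom pre s := match s with
  | [::] => true | z :: s' => cond pre z && vfrom (rcons pre z) s' end.
Definition partial (g : 'I_r -> T) := (forall i, i \in C -> p (g i) = i) /\
  (forall i j, i \in C -> j \in C -> ~~ e (g i) (g j)).
Definition S2 g (s : seq (T*T)) := forall z, z \in s -> cls z \in C /\ g (cls z) = z.2.
Definition aN g x := #|[set i in C | e x (g i)]|.
Definition meas g (s : seq (T*T)) (pd : option T) := map (fun z => 2 * aN g z.1) s ++
  (if pd is Some x then [:: (2 * aN g x).+1] else [::]).
Definition Inv g s (pd : option T) := [/\ partial g, vfrom [::] s, S2 g s &
  (if pd is Some x then U s x && ~~ dom s x else true)].

Lemma vfrom_cat pre s1 s2 : vfrom pre (s1 ++ s2) = vfrom pre s1 && vfrom (pre ++ s1) s2.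
Proof.
elim: s1 pre => [|z s1 IH] pre /=; first by rewrite cats0.
by rewrite IH cat_rcons andbA.
Qed.

Lemma distinct s1 z s2 : vfrom [::] (s1 ++ z :: s2) -> forall w, w \in s1 -> w.2 != z.2.
Proof.
rewrite vfrom_cat /= => /andP[_ /andP[/and3P[ez _ nd] _]] w ws.
apply/eqP => ew. move: nd; rewrite /dom => /hasPn /(_ w ws).
by rewrite ew (esym z.2) ez orbT.
Qed.

Lemma uniq_cls g s : vfrom [::] s -> S2 g s -> uniq (map cls s).
Proof.
elim/last_ind: s => [//|s z IH] vs h2.
rewrite map_rcons rcons_uniq.
have h2s : S2 g s by move=> w ws; apply: h2; rewrite mem_rcons inE ws orbT.
move: (vs); rewrite -cats1 vfrom_cat => /andP[vs' _].
rewrite IH // andbT. apply/mapP => -[w ws ew].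
have := @distinct s z [::]; rewrite cats1 => /(_ vs w ws).
case: (h2 w); first by rewrite mem_rcons inE ws orbT.
case: (h2 z); first by rewrite mem_rcons inE eqxx.
by move=> _ <- _ <-; rewrite ew eqxx.
Qed.

Lemma card_cls (cs : seq 'I_r) : uniq cs ->
  #|[set w | p w \in cs]| = \sum_(c <- cs) #|part p c|.
Proof.
elim: cs => [|c cs IH] /=.
  by move=> _; rewrite big_nil; apply/eqP; rewrite cards_eq0; apply/eqP/setP=> w; rewrite !inE.
move=> /andP[ccs ucs]; rewrite big_cons -IH //.
have -> : [set w | p w \in c :: cs] = part p c :|: [set w | p w \in cs].
  by apply/setP => w; rewrite !inE.
rewrite cardsU.
have -> : part p c :&: [set w | p w \in cs] = set0.
  apply/setP => w; rewrite !inE. apply/negbTE/negP => /andP[/eqP pc h].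
  by rewrite -pc h in ccs.
by rewrite cards0 subn0.
Qed.

Lemma cardU g s : vfrom [::] s -> S2 g s ->
  #|[set w | U s w]| = 1 + \sum_(z <- s) #|part p (cls z)|.
Proof.
move=> vs h2.
have -> : [set w | U s w] = v |: [set w | p w \in map cls s].
  by apply/setP => w; rewrite !inE.
rewrite cardsU1 card_cls; last exact: (uniq_cls vs h2). rewrite (big_map cls xpredT).
suff -> : v \notin [set w | p w \in map cls s] by [].
rewrite inE; apply/mapP => -[z zs ez].
by case: (h2 z zs) => hz _; have := vC; rewrite ez hz.
Qed.

Lemma cardDom s : #|[set w | dom s w]| <= \sum_(z <- s) (deg e z.1 + deg e z.2).
Proof.
elim: s => [|z s IH].
  by rewrite big_nil leqn0 cards_eq0; apply/eqP/setP => w; rewrite !inE.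
rewrite big_cons.
have -> : [set w | dom (z :: s) w] =
   ([set w | e z.1 w] :|: [set w | e z.2 w]) :|: [set w | dom s w].
  by apply/setP => w; rewrite !inE /dom /=; case: (e z.1 w); case: (e z.2 w).
rewrite /deg. apply: leq_trans (leq_card_setU _ _) _.
by apply: leq_add; [exact: leq_card_setU | exact: IH].
Qed.


Lemma no_stuck g s : Inv g s None -> (forall w, U s w -> dom s w) -> False.
Proof.
case=> pg vs h2 _ H.
have h1 : #|[set w | U s w]| <= #|[set w | dom s w]|.
  apply: subset_leq_card; apply/subsetP => w; rewrite !inE; exact: H.
have h3 : \sum_(z <- s) (deg e z.1 + deg e z.2) <= \sum_(z <- s) #|part p (cls z)|.
  apply: leq_sum => z _. case: (hdeg z.1) => a _; case: (hdeg z.2) => _ b.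
  rewrite /cls. lia.
have := cardDom s. rewrite (cardU vs h2) in h1. lia.
Qed.

Lemma meas_bounds g s pd : Inv g s pd ->
  size (meas g s pd) <= r.+1 /\ all (fun a => a.+2 <= (2*r).+3) (meas g s pd).
Proof.
case=> pg vs h2 _.
have aNr x' : aN g x' <= r.
  by rewrite /aN; apply: leq_trans (max_card _) _; rewrite card_ord.
split.
- rewrite size_cat size_map. have : size s <= r.
    have u := uniq_cls vs h2. move/card_uniqP: u => u. rewrite size_map in u.
    by rewrite -u; apply: leq_trans (max_card _) _; rewrite card_ord.
  case: pd => [x|] /=; lia.
- rewrite all_cat; apply/andP; split.
  + apply/allP => a /mapP [z _ ->]. rewrite !ltnS; apply: (leq_trans _ (leqnSn _)). by rewrite leq_mul2l aNr orbT.
  + case: pd => [x|] //=. have := aNr x. lia.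
Qed.

Lemma key g0 : partial g0 ->
  exists g', partial g' /\ (forall i, i \in C -> ~~ e v (g' i)).
Proof.
move=> pg0.
suff H : forall n g s pd, Inv g s pd -> enc (2*r).+3 r.+1 (meas g s pd) < n ->
    exists g', partial g' /\ (forall i, i \in C -> ~~ e v (g' i)).
  apply: (H (enc (2*r).+3 r.+1 (meas g0 [::] None)).+1 g0 [::] None) => //.
elim=> [//|n IH] g s pd inv hn.
have Hdec : forall g' s' pd', Inv g' s' pd' -> ltlex (meas g' s' pd') (meas g s pd) ->
    exists g'', partial g'' /\ (forall i, i \in C -> ~~ e v (g'' i)).
  move=> g' s' pd' inv' lt. apply: (IH g' s' pd' inv').
  case: (meas_bounds inv) => b1 b2. case: (meas_bounds inv') => b1' b2'.
  have := @enc_mono (2*r).+3 r.+1 _ _ (ltn0Sn _) b1' b1 b2' b2 lt. lia.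
case: inv => pg vs h2 hpd.
case: pd hpd hn Hdec => [x|] hpd hn Hdec; last first.
- case: (pickP (fun w => U s w && ~~ dom s w)) => [w /andP[uw ndw] | none].
  + apply: (Hdec g s (Some w)); first by split => //; rewrite uw ndw.
    rewrite /meas cats0. exact: ltlex_ext.
  + exfalso. apply: (@no_stuck g s); first by split.
    move=> w uw. have := none w. rewrite uw /=. by move/negbFE.
- case/andP: hpd => Ux ndx.
  case: (pickP (fun i => (i \in C) && e x (g i))) => [i /andP[iC exi] | nonb].
  + apply: (Hdec g (rcons s (x, g i)) None).
    * split => //.
      - by rewrite -cats1 vfrom_cat vs /= /cond /= exi Ux ndx.
      - move=> z; rewrite mem_rcons inE => /orP[/eqP -> | zs]; last exact: h2.
        rewrite /cls /=. case: pg => pg1 _. by rewrite pg1.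
    * rewrite /meas -cats1 map_cat /= -catA /=. by apply: ltlex_map.
  + case xv: (x == v).
    * exists g; split => // i iC. move/eqP: xv => <-.
      by have := nonb i; rewrite iC /= => ->.
    * have : p x \in map cls s by move: Ux; rewrite /U xv.
      case/mapP => z zs pxz.
      move: vs h2 ndx hn Hdec Ux. case/splitPr: zs => s1 s2 vs h2 ndx hn Hdec Ux.
      pose g' := fun i => if i == p x then x else g i.
      have [pg1 pg2] := pg.
      have [zC gz] : cls z \in C /\ g (cls z) = z.2.
        by apply: h2; rewrite mem_cat inE eqxx orbT.
      have ndx' : forall w, w \in s1 ++ z :: s2 -> ~~ e w.1 x.
        move=> w ws; move: ndx; rewrite /dom => /hasPn /(_ w ws).
        by rewrite negb_or => /andP[].
      have nbr : forall j, j \in C -> ~~ e x (g j).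
        by move=> j jC; have := nonb j; rewrite jC /= => ->.
      have hcond : cond s1 z.
        by move: vs; rewrite vfrom_cat /= => /andP[_ /andP[]].
      case/and3P: hcond => hez hU hnd.
      have ndxz : e z.1 x = false.
        by apply/negbTE/ndx'; rewrite mem_cat inE eqxx orbT.
      apply: (Hdec g' s1 (Some z.1)).
      * split.
        - split.
          + move=> i iC. rewrite /g'. case: ifP => [/eqP -> //| _]; exact: pg1.
          + move=> i j iC jC. rewrite /g'.
            case: ifP => _; case: ifP => _.
            * by rewrite eirr.
            * exact: nbr.
            * rewrite esym; exact: nbr.
            * exact: pg2.
        - by move: vs; rewrite vfrom_cat => /andP[].
        - move=> w ws. have [wC gw] : cls w \in C /\ g (cls w) = w.2 by apply: h2; rewrite mem_cat ws.
          split => //. rewrite /g'.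
          have : cls w != p x.
            rewrite pxz. apply: contra (distinct vs ws) => /eqP h.
            by apply/eqP; rewrite -gw -gz h.
          by move/negbTE => ->.
        - by rewrite hU hnd.
      * have sub : forall y, ~~ e y x ->
          [set i in C | e y (g' i)] \subset [set i in C | e y (g i)].
          move=> y ny; apply/subsetP => i; rewrite !inE /g'.
          by case: ifP => [/eqP -> | _] //; rewrite (negbTE ny) andbF.
        rewrite /meas map_cat -catA /=. apply: ltlex_map.
        - move=> w ws. rewrite leq_mul2l /aN. apply/orP; right.
          apply: subset_leq_card; apply: sub; apply: ndx'.
          by rewrite mem_cat ws.
        - have : [set i in C | e z.1 (g' i)] \subset [set i in C | e z.1 (g i)] :\ p x.
            apply/subsetP => i; rewrite !inE /g'.
            case: ifP => [/eqP -> | _] //; rewrite ?ndxz ?andbF //.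
          have cin : p x \in [set i in C | e z.1 (g i)].
            by rewrite inE pxz zC /= gz hez.
          move/subset_leq_card => hle. have := cardsD1 (p x) [set i in C | e z.1 (g i)]. rewrite cin.
          rewrite /aN => ->. move: hle. rewrite /=. set a := #|_ :\ _|. set b := #|_|. lia.
Qed.

End Haxell.

Lemma degP (a b k : nat) : ((a%:Z <= Num.min (k%:Z) (b%:Z - k%:Z))%R) -> a <= k /\ a + k <= b.
Proof. rewrite le_min => /andP[h1 h2]. split; lia. Qed.

Lemma general (T : finType) (e : rel T) (r k : nat) (p : T -> 'I_r)
  (esym : symmetric e) (eirr : irreflexive e)
  (hdeg : forall x, deg e x <= k /\ deg e x + k <= #|part p (p x)|)
  (hne : forall i, part p i != set0) :
  forall n (C : {set 'I_r}), #|C| <= n -> forall v, p v \in C ->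
  exists g : 'I_r -> T, [/\ forall i, i \in C -> p (g i) = i,
     forall i j, i \in C -> j \in C -> ~~ e (g i) (g j) & g (p v) = v].
Proof.
elim=> [|n IH] C hC v vC.
  by move: hC; rewrite leqn0 cards_eq0 => /eqP C0; rewrite C0 inE in vC.
case: (set_0Vmem (C :\ p v)) => [C'0 | [c1 c1C']].
  have iv : forall i, i \in C -> i = p v.
    move=> i iC; apply/eqP; apply: contraT => ne.
    have : i \in C :\ p v by rewrite !inE ne iC.
    by rewrite C'0 inE.
  exists (fun _ => v); split => //.
  - by move=> i iC; rewrite (iv i iC).
  - by move=> i j _ _; rewrite eirr.
have /set0Pn [w wc] := hne c1.
have pw : p w = c1 by move: wc; rewrite inE => /eqP.
have hC' : #|C :\ p v| <= n.
  move: hC; rewrite (cardsD1 (p v) C) vC /=. by rewrite add1n ltnS.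
have pwC : p w \in C :\ p v by rewrite pw.
have [g0 [pg1 pg2 _]] := IH (C :\ p v) hC' w pwC.
have vC' : p v \notin C :\ p v by rewrite !inE eqxx.
have [g' [[pg1' pg2'] nv]] := key esym eirr hdeg vC' (conj pg1 pg2).
exists (fun i => if i == p v then v else g' i); split.
- move=> i iC. case: ifP => [/eqP -> //| ne].
  by apply: pg1'; rewrite !inE ne iC.
- move=> i j iC jC.
  case: ifP => ei; case: ifP => ej.
  + by rewrite eirr.
  + by apply: nv; rewrite !inE ej jC.
  + by rewrite esym; apply: nv; rewrite !inE ei iC.
  + by apply: pg2'; rewrite !inE ?ei ?ej ?iC ?jC.
- by rewrite eqxx.
Qed.

Theorem theorem5 (T : finType) (e : rel T) (r k : nat) (p : T -> 'I_r) :
  (0 < k)%N ->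
  simple_graph e ->
  (forall i : 'I_r, part p i != set0) ->
  (forall i : 'I_r, stable e (part p i)) ->
  (forall x : T,
     ((deg e x)%:Z <= Num.min (k%:Z) ((#|part p (p x)|)%:Z - k%:Z))%R) ->
  forall v : T, exists S : {set T}, v \in S /\ is_ISR e p S.
Proof.
move=> _ [esym eirr] hne _ hdegZ v.
have hdeg : forall x, deg e x <= k /\ deg e x + k <= #|part p (p x)|.
  by move=> x; apply: degP.
have [g [pg1 pg2 gv]] := general esym eirr hdeg hne (leqnn #|[set: 'I_r]|) (in_setT (p v)).
have ginj : injective g.
  by move=> i j eij; rewrite -(pg1 i (in_setT _)) eij pg1 ?in_setT.
exists (g @: [set: 'I_r]); split; first by apply/imsetP; exists (p v); rewrite ?in_setT.
split; [|split].
- move=> x y /imsetP[i _ ->] /imsetP[j _ ->]. by apply: pg2; rewrite in_setT.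
- by rewrite card_imset // cardsT card_ord.
- move=> i.
  have -> : g @: [set: 'I_r] :&: part p i = [set g i].
    apply/setP => y; rewrite !inE. apply/andP/eqP.
    + case=> /imsetP[j _ ->]. rewrite pg1 ?in_setT // => /eqP -> //.
    + by move=> ->; split; [apply/imsetP; exists i; rewrite ?in_setT | rewrite pg1 ?in_setT].
  by rewrite cards1.
Qed.
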